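(* Let $L/K$ be a nontrivial finite extension inside $\bar K$, and let $G={\rm Gal}(\tilde L/K)$, $H={\rm Gal}(\tilde L/L)$. (1) The field $N=\tilde L^{N_G(H)}$ is the unique intermediate field $K\subseteq N\subseteq L$ such that $L/N$ is Galois of degree $[L:N]=r_K(L)$. Hence $[N:K]=s_K(L)$. (2) There is a unique strictly descending chain of subfields $L=N_0\supsetneq N_1\supsetneq\cdots\supsetneq N_k$ such that for all $i\ge1$, $N_{i-1}/N_i$ is Galois of degree $[N_{i-1}:N_i]=r_K(N_{i-1})$, the chain terminating at $N_k$ with $r_K(N_k)=1$. Hence $[N_i:K]=s_K(N_{i-1})$ for all $i\ge1$, and $s_K(N_{k-1})=s_K(N_k)$. This chain corresponds (via $N_i=\tilde L^{H_i}$) to the unique strictly ascending chain of subgroups $H=H_0\subsetneq H_1\subsetneq\cdots\subsetneq H_k$ of $G$ with $H_i=N_G(H_{i-1})$ (so each $H_{i-1}$ is a proper normal subgroup of $H_i$) and $N_G(H_k)=H_k$; moreover $r_K(N_i)=[H_{i+1}:H_i]$ and $s_K(N_i)=[G:H_{i+1}]$. (3) $L/K$ is obtained by weak cluster magnification from $N_k/K$ with magnification factor $r_K(L)$. (4) $N_k=K$ if and only if $N_{k-1}/K$ is Galois. (5) $r_K(L)=1$ iff $N_G(H)=H$ iff the chain in (2) is the singleton $L$. (6) $L/K$ is Galois iff $N_G(H)=G$ iff the chain in (2) is $L\supsetneq K$. (7) $N_G(H)$ is a proper normal subgroup of $G$ iff the chain in (2) is $L\supsetneq N\supsetneq K$.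
   Context: $K$ is a perfect field with a fixed algebraic closure $\bar K$; all extensions are finite and contained in $\bar K$. For a finite extension $L/K$, $\tilde L$ denotes its Galois closure in $\bar K$. Writing $L=K(\alpha)$ with $f$ the minimal polynomial of $\alpha$ over $K$, the cluster size $r_K(L)$ is the number of roots of $f$ lying in $L$ (independent of $\alpha$; it equals $|{\rm Aut}(L/K)|$), and $s_K(L)=[L:K]/r_K(L)$. For $K\subseteq L\subseteq M$, $M/K$ is said to be obtained by weak cluster magnification from $L/K$ if $r_K(L)\mid r_K(M)$; the magnification factor is $r_K(M)/r_K(L)$. $N_G(H)$ denotes the normalizer of $H$ in $G$. *)

(* Defs.v *)
From HB Require Import structures.
From mathcomp Require Import all_boot all_order all_algebra all_fingroup all_solvable all_field.
Set Implicit Arguments. Unset Strict Implicit. Unset Printing Implicit Defensive.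
Import GRing.Theory.
Local Open Scope ring_scope.

(* Ambient setting: E is a finite splitting-field extension; all fields of the
   paper (K, L, the Galois closure of L/K, intermediate fields) are subfields
   of E, and E/K is assumed Galois (this plays the role of \bar K). *)
Section ClusterDefs.
Variables (F : fieldType) (E : splittingFieldType F).
Implicit Types K L M : {subfield E}.

Definition minPoly_roots K (x : E) : seq E :=
  xchoose (splitting_field_normal K x).

(* r_K(L): number of roots of the minimal polynomial over K of a primitive
   element alpha of L = K(alpha) that lie in L. *)
Definition cluster_size K L : nat :=
  let alpha := separable_generator K L in
  size (undup [seq y <- minPoly_roots K alpha | y \in L]).

Definition cluster_s K L : nat := (\dim_K L %/ cluster_size K L)%N.

(* Galois closure of L/K inside E: compositum of the K-conjugates of L. *)
Definition galois_closure K L : {subfield E} :=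
  (<< \sum_(g in 'Gal({:E} / K)%g) (g @: L)%VS >>)%AS.

Definition fixed_subfield (V : {subfield E}) (A : {set gal_of V}) : {subfield E} :=
  fixedField_aspace A.

Definition weak_cluster_magnification K L M : bool :=
  [&& (K <= L)%VS, (L <= M)%VS & (cluster_size K L %| cluster_size K M)%N].

Definition magnification_factor K L M : nat :=
  (cluster_size K M %/ cluster_size K L)%N.

Definition cluster_chain K L (k : nat) (N : nat -> {subfield E}) : Prop :=
  [/\ N 0%N = L,
      forall i, (0 < i <= k)%N ->
        [/\ (K <= N i)%VS, (N i <= N i.-1)%VS, N i != N i.-1,
            galois (N i) (N i.-1)
          & \dim_(N i) (N i.-1) = cluster_size K (N i.-1)]
    & cluster_size K (N k) = 1%N].

End ClusterDefs.

Definition normalizer_chain (gT : finGroupType) (G H : {group gT}) (k : nat)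
    (Hs : nat -> {group gT}) : Prop :=
  [/\ Hs 0%N :=: H,
      forall i, (0 < i <= k)%N -> Hs i :=: 'N_G(Hs i.-1)%g /\ Hs i.-1 \proper Hs i
    & 'N_G(Hs k)%g :=: Hs k].

(* Main.v *)
Require Import Defs.
From HB Require Import structures.
From mathcomp Require Import all_boot all_order all_algebra all_fingroup all_solvable all_field.
From mathcomp Require Import zify.
Set Implicit Arguments. Unset Strict Implicit. Unset Printing Implicit Defensive.
Import GRing.Theory.
Local Open Scope ring_scope.

Section Gen.
Variables (F : fieldType) (E : splittingFieldType F) (K T : {subfield E}).
Hypothesis galKT : galois K T.
Local Notation G := ('Gal(T / K)%G).

Lemma sKT : (K <= T)%VS.
Proof. by case/and3P: galKT. Qed.

Lemma fixF_sub (X : {set gal_of T}) : X \subset G -> (K <= fixedField X)%VS.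
Proof. by rewrite -galois_connection // sKT. Qed.

Lemma fixF_le (X Y : {group gal_of T}) :
  (fixedField Y <= fixedField X)%VS = (X \subset Y).
Proof. by rewrite -galois_connection ?fixedField_bound // gal_fixedField. Qed.

Lemma fixF_inj (X Y : {group gal_of T}) :
  fixedField X = fixedField Y -> X :=: Y.
Proof. by move=> eqXY; rewrite -(gal_fixedField X) eqXY gal_fixedField. Qed.

Lemma fixF_gal (M : {subfield E}) :
  (K <= M)%VS -> (M <= T)%VS -> fixedField 'Gal(T / M)%g = M.
Proof.
move=> sKM sMT; apply/galois_fixedField; apply: galoisS galKT.
by rewrite sKM sMT.
Qed.

Lemma fixF_K : fixedField G = K.
Proof. exact/galois_fixedField. Qed.

Lemma dimC (X Y : {group gal_of T}) : X \subset Y ->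
  \dim_(fixedField Y) (fixedField X) = #|Y : X|%g.
Proof.
move=> sXY.
have gY := galois_dim (fixedField_galois Y).
have gX := galois_dim (fixedField_galois X).
rewrite !gal_fixedField in gY gX.
have sYX : (fixedField Y <= fixedField X)%VS by rewrite fixF_le.
have dT1 := dim_sup_field (fixedField_bound X).
have dT2 := dim_sup_field (fixedField_bound Y).
have dX := dim_sup_field sYX.
rewrite gX dX in dT1; rewrite gY -(Lagrange sXY) dT1 in dT2.
move: dT2; rewrite -[(#|X| * _ * _)%N]mulnA => /eqP.
by rewrite eqn_pmul2l ?cardG_gt0 // eqn_pmul2r ?adim_gt0 // => /eqP.
Qed.

Lemma galB (X Y : {group gal_of T}) : X \subset Y ->
  galois (fixedField Y) (fixedField X) = (X <| Y)%g.
Proof.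
move=> sXY; have gY := fixedField_galois Y.
have sYX : (fixedField Y <= fixedField X)%VS by rewrite fixF_le.
apply/idP/idP => [gYX | nXY].
  have := normalField_normal (E := T) (_ : (fixedField Y <= fixedField X <= T)%VS) (_ : normalField (fixedField Y) (fixedField X)).
  rewrite !gal_fixedField; apply; first by rewrite sYX fixedField_bound.
  by case/and3P: gYX.
have := @normal_fixedField_galois _ _ T (fixedField Y) gY X.
by rewrite gal_fixedField; apply.
Qed.


Lemma clusterA (X : {group gal_of T}) : X \subset G ->
  cluster_size K (fixedField_aspace X) = #|'N_G(X) : X|%g.
Proof.
move=> sXG.
set M := fixedField_aspace X.
set NX := ('N_G(X))%G.
have sXN : X \subset NX by rewrite subsetI sXG normG.
have sNG : NX \subset G by rewrite subsetIl.
have sKM : (K <= M)%VS := fixF_sub sXG.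
have sMT : (M <= T)%VS := fixedField_bound X.
have sKN : (K <= fixedField NX)%VS := fixF_sub sNG.
have sNM : (fixedField NX <= M)%VS by rewrite fixF_le.
case/and3P: galKT => _ sepKT nKT.
have sepKM : separable K M := separableSr sMT sepKT.
set a := separable_generator K M.
have Ma : a \in M := separable_generator_mem M K.
have Ta : a \in T := subvP sMT a Ma.
have DM : (M : {vspace E}) = <<K; a>>%VS := eq_adjoin_separable_generator sepKM sKM.
have galNM : galois (fixedField NX) M by rewrite galB // normal_subnorm.
have DM' : <<fixedField NX; a>>%VS = M.
  apply/eqP; rewrite eqEsubv; apply/andP; split.
    by apply/FadjoinP; split.
  by rewrite {1}DM adjoinSl.
case/and3P: galNM => _ sepNM nNM.
have [rN /allP rNM DpN] := normalFieldP nNM a Ma.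
have UrN : uniq rN.
  by rewrite -separable_prod_XsubC -DpN; apply: (separableP sepNM a Ma).
have szN : size rN = #|NX : X|%g.
  have := size_minPoly (fixedField NX) a; rewrite DpN size_prod_XsubC => -[->].
  by rewrite adjoin_degreeE DM' dimC.
have DpK : minPoly K a = \prod_(y <- minPoly_roots K a) ('X - y%:P).
  exact: (eqP (xchooseP (splitting_field_normal K a))).
rewrite /cluster_size -/a -szN; apply/perm_size/uniq_perm; rewrite ?undup_uniq //.
move=> y; rewrite mem_undup mem_filter.
apply/andP/idP.
  case=> My; rewrite -root_prod_XsubC -DpK => rootK.
  rewrite -root_prod_XsubC -DpN.
  have [x galx xa] := normalField_root_minPoly sKT nKT Ta rootK.
  rewrite -xa; apply: root_minPoly_gal; [exact: fixedField_bound | | exact: Ta].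
  rewrite gal_fixedField inE galx /=; apply/normP.
  rewrite -{1 2}(gal_fixedField X) gal_conjg; congr (galoisG _ _).
  have xK : (x @: K)%VS = K.
    rewrite -[in RHS](lim1g K); apply: eq_in_limg => b Kb.
    by rewrite (fixed_gal sKT galx Kb) id_lfunE.
  have xM : (x @: M <= M)%VS.
    rewrite DM aimg_adjoin; apply/FadjoinP; split.
      apply: subv_trans (subv_adjoin K a); apply/subvP => _ /memv_imgP[b Kb ->].
      by rewrite (fixed_gal sKT galx Kb).
    by move: My; rewrite DM xa.
  apply/eqP; rewrite -(dimv_leqif_eq xM) limg_dim_eq //.
  by rewrite (eqP (AEnd_lker0 _)) capv0.
move=> rNy.
have rootN : root (minPoly (fixedField NX) a) y by rewrite DpN root_prod_XsubC.
split; first exact: rNM.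
rewrite -root_prod_XsubC -DpK.
exact: root_dvdp (minPolyS _ sKN) rootN.
Qed.

Lemma dimK (X : {group gal_of T}) : X \subset G ->
  \dim_K (fixedField X) = #|G : X|%g.
Proof. by move=> sXG; have := dimC sXG; rewrite fixF_K. Qed.

Lemma clusterS (X : {group gal_of T}) : X \subset G ->
  cluster_s K (fixedField_aspace X) = (#|G : 'N_G(X)|)%g.
Proof.
move=> sXG.
have sXN : X \subset 'N_G(X)%G by rewrite subsetI sXG normG.
have sNG : 'N_G(X)%G \subset G by rewrite subsetIl.
rewrite /cluster_s clusterA // dimK //.
by rewrite -(Lagrange_index sNG sXN) mulnK ?indexg_gt0.
Qed.

Lemma stepU (X : {group gal_of T}) (M : {subfield E}) : X \subset G ->
  (K <= M)%VS -> (M <= fixedField X)%VS -> galois M (fixedField X) ->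
  \dim_M (fixedField X) = cluster_size K (fixedField_aspace X) ->
  (M : {vspace E}) = fixedField ('N_G(X))%g.
Proof.
move=> sXG sKM sMX gMX dMX.
have sMT : (M <= T)%VS := subv_trans sMX (fixedField_bound X).
pose Y := 'Gal(T / M)%G.
have DM : fixedField Y = M := fixF_gal sKM sMT.
have sXY : X \subset Y by rewrite -fixF_le DM.
have nXY : (X <| Y)%g by rewrite -galB // DM.
have sYG : Y \subset G := galS T sKM.
have sYN : Y \subset 'N_G(X)%G by rewrite subsetI sYG normal_norm.
have eqI : #|Y : X|%g = #|'N_G(X) : X|%g.
  by rewrite -dimC // DM dMX clusterA.
have sXN : X \subset 'N_G(X)%G by rewrite subsetI sXG normG.
have eqYN : Y :=: 'N_G(X)%g.
  apply/eqP; rewrite eqEcard sYN /= -(Lagrange sXY) -(Lagrange sXN) eqI.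
  by [].
by rewrite -DM eqYN.
Qed.


Section Chain.
Local Open Scope nat_scope.
Variable L : {subfield E}.
Hypotheses (sKL : (K <= L)%VS) (sLT : (L <= T)%VS).
Local Notation H := ('Gal(T / L)%G).

Lemma sHG : H \subset G.
Proof. exact: galS. Qed.

Definition Hs (i : nat) : {group gal_of T} :=
  iter i (fun X : {group gal_of T} => ('N_G(X))%G) H.

Definition Pfix j := ('N_G(Hs j) == Hs j :> {set gal_of T})%g.

Lemma Hs_sub i : Hs i \subset G.
Proof. by case: i => [|i] /=; [exact: sHG | exact: subsetIl]. Qed.

Lemma Hs_S i : Hs i \subset Hs i.+1.
Proof. by rewrite /= subsetI Hs_sub normG. Qed.

Lemma Hs_mono i j : i <= j -> Hs i \subset Hs j.
Proof.
move=> lij; rewrite -(subnKC lij); elim: (j - i) => [|d IH]; first by rewrite addn0.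
by rewrite addnS; apply: subset_trans IH (Hs_S _).
Qed.

Lemma Hs_propS i : ~~ Pfix i -> Hs i \proper Hs i.+1.
Proof.
move=> nPi; rewrite properEneq Hs_S andbT; apply: contra nPi => /eqP eqi.
by rewrite /Pfix {2}eqi.
Qed.

Lemma exPfix : exists j, Pfix j.
Proof.
have grow : forall i, (forall j, j < i -> ~~ Pfix j) -> i + #|H| <= #|Hs i|.
  elim=> [|i IH] nP; first by rewrite add0n.
  have h1 := IH (fun j lt => nP j (leqW lt)).
  have h2 := proper_card (Hs_propS (nP i (ltnSn i))).
  lia.
case: (boolP [exists j : 'I_#|G|.+1, Pfix j]) => [/existsP[j Pj]| /existsPn nP].
  by exists j.
have g := grow #|G|.+1 (fun j lt => nP (Ordinal lt)).
have le : #|Hs #|G|.+1| <= #|G| by apply: subset_leq_card; apply: Hs_sub.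
have := leq_trans g le; by rewrite addSn ltnNge leq_addr.
Qed.

Definition kk := ex_minn exPfix.

Lemma Pk : Pfix kk.
Proof. by rewrite /kk; case: ex_minnP. Qed.

Lemma k_min j : Pfix j -> kk <= j.
Proof. by rewrite /kk; case: ex_minnP => m _ h; apply: h. Qed.

Lemma nPk j : j < kk -> ~~ Pfix j.
Proof. by move=> ltj; apply/negP => /k_min; rewrite leqNgt ltj. Qed.

Definition Nc i : {subfield E} := fixed_subfield (Hs i).

Lemma Nc0 : Nc 0 = L.
Proof. by apply/val_inj; rewrite /= fixF_gal. Qed.

Lemma fixH : fixedField H = L.
Proof. by rewrite fixF_gal. Qed.

Lemma Hs_chain : normalizer_chain G H kk Hs.
Proof.
split; first reflexivity; last exact/eqP/Pk.
case=> [|i]; first by rewrite ltnn.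
move=> /andP[_ lei]; split; first reflexivity.
by apply: Hs_propS; apply: nPk.
Qed.

Lemma Hs_unique k' Hs' : normalizer_chain G H k' Hs' ->
  k' = kk /\ (forall i, i <= kk -> Hs' i :=: Hs i).
Proof.
case=> H0 Hstep Hlast.
have eqH : forall i, i <= k' -> Hs' i :=: Hs i.
  elim=> [|i IH] lei; first by rewrite H0.
  have [-> _] := Hstep i.+1 lei.
  by rewrite -[i.+1.-1]/i IH; [reflexivity | exact: ltnW].
have Pk' : Pfix k' by rewrite /Pfix -(eqH k') // Hlast.
have lek := k_min Pk'.
have k'k : k' = kk.
  apply/eqP; rewrite eqn_leq lek andbT leqNgt; apply/negP => ltkk'.
  have [_] := Hstep kk.+1 ltkk'.
  rewrite -[kk.+1.-1]/kk (eqH kk (ltnW ltkk')) (eqH kk.+1 ltkk').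
  by move/proper_neq; rewrite -[gval (Hs kk.+1)]/('N_G(Hs kk))%g (eqP Pk) eqxx.
split; first exact: k'k.
by move=> i lei; apply: eqH; rewrite k'k.
Qed.

Lemma Nc_chain : cluster_chain K L kk Nc.
Proof.
split; first exact: Nc0.
  case=> [|i]; first by rewrite ltnn.
  move=> /andP[_ lei]; rewrite -[i.+1.-1]/i; split.
  - exact: fixF_sub (Hs_sub _).
  - by rewrite fixF_le Hs_S.
  - apply/negP => /eqP/(congr1 val) eqi.
    have := nPk lei; rewrite /Pfix.
    by rewrite -[('N_G(Hs i))%g]/(gval (Hs i.+1)) (fixF_inj eqi) eqxx.
  - by rewrite galB ?Hs_S // normal_subnorm Hs_sub.
  - by rewrite dimC ?Hs_S // clusterA ?Hs_sub.
rewrite clusterA; last exact: Hs_sub.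
by rewrite (eqP Pk) indexgg.
Qed.

Lemma Nc_unique k' Nc' : cluster_chain K L k' Nc' ->
  k' = kk /\ (forall i, i <= kk -> Nc' i = Nc i).
Proof.
case=> N0 Nstep Nlast.
have eqN : forall i, i <= k' -> Nc' i = Nc i.
  elim=> [|i IH] lei; first by rewrite N0 Nc0.
  have [sK sN neq gal dim] := Nstep i.+1 lei.
  move: sN gal dim; rewrite -[i.+1.-1]/i (IH (ltnW lei)) => sN gal dim.
  apply/val_inj; exact: (stepU (Hs_sub i) sK sN gal dim).
have Pk' : Pfix k'.
  move: Nlast; rewrite (eqN k' (leqnn _)) clusterA; last exact: Hs_sub.
  move=> /eqP; rewrite indexg_eq1 => sub; rewrite /Pfix eqEsubset sub.
  exact: (Hs_S k').
have lek := k_min Pk'.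
have k'k : k' = kk.
  apply/eqP; rewrite eqn_leq lek andbT leqNgt; apply/negP => ltkk'.
  have [_ _] := Nstep kk.+1 ltkk'.
  rewrite -[kk.+1.-1]/kk (eqN kk (ltnW ltkk')) (eqN kk.+1 ltkk').
  suff -> : Nc kk.+1 = Nc kk by rewrite eqxx.
  apply/val_inj; rewrite -[val (Nc kk.+1)]/(fixedField ('N_G(Hs kk))%g).
  by rewrite (eqP Pk).
split; first exact: k'k.
by move=> i lei; apply: eqN; rewrite k'k.
Qed.

Lemma galK (X : {group gal_of T}) : X \subset G ->
  galois K (fixedField X) = (X <| G)%g.
Proof. by move=> sXG; rewrite -(galB sXG) fixF_K. Qed.

Lemma fixK (X : {group gal_of T}) : (fixedField X = K) <-> (X :=: G).
Proof.
split=> [eqX | ->]; last exact: fixF_K.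
by apply: fixF_inj; rewrite eqX fixF_K.
Qed.

Lemma NG_eq_normal (X : {group gal_of T}) : X \subset G ->
  ('N_G(X) :=: G)%g <-> (X <| G)%g.
Proof.
move=> sXG; split=> [eqN | nXG].
  by rewrite /normal sXG -eqN subsetIr.
by apply/setIidPl; apply: normal_norm.
Qed.

Lemma NGG : ('N_G(G))%g = G.
Proof. by apply/setIidPl; apply: normG. Qed.

Lemma HsS_def i : Hs i.+1 :=: ('N_G(Hs i))%g.
Proof. reflexivity. Qed.

Lemma Nc0' : fixedField_aspace H = L.
Proof. by apply/val_inj; rewrite /= fixF_gal. Qed.

Lemma cL : cluster_size K L = #|'N_G(H) : H|%g.
Proof. by rewrite -(clusterA sHG) Nc0'. Qed.

Lemma Pfix_succ i : Pfix i -> Pfix i.+1.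
Proof.
rewrite /Pfix; change (('N_G(Hs i) == Hs i)%g -> ('N_G('N_G(Hs i)) == 'N_G(Hs i))%g).
by move/eqP => P; rewrite !P eqxx.
Qed.

Lemma main_gen : L != K ->
  let H := H in
  let NGH := 'N_G(H)%G in
  let N := fixed_subfield NGH in
  [/\ (K <= N)%VS, (N <= L)%VS, galois N L, \dim_N L = cluster_size K L
    & (forall M : {subfield E}, (K <= M)%VS -> (M <= L)%VS -> galois M L ->
         \dim_M L = cluster_size K L -> M = N)]
  /\ \dim_K N = cluster_s K L
  /\
  exists (k : nat) (Nc : nat -> {subfield E}) (Hs : nat -> {group gal_of T}),
  [/\ cluster_chain K L k Nc,
      (forall k' Nc', cluster_chain K L k' Nc' ->
         k' = k /\ (forall i, (i <= k)%N -> Nc' i = Nc i)),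
      (forall i, (0 < i <= k)%N -> \dim_K (Nc i) = cluster_s K (Nc i.-1))
    & ((0 < k)%N -> cluster_s K (Nc k.-1) = cluster_s K (Nc k))]
  /\
  [/\ normalizer_chain G H k Hs,
      (forall k' Hs', normalizer_chain G H k' Hs' ->
         k' = k /\ (forall i, (i <= k)%N -> Hs' i :=: Hs i)),
      (forall i, (0 < i <= k)%N -> (Hs i.-1 <| Hs i)%g /\ Hs i.-1 \proper Hs i),
      (forall i, (i <= k)%N -> (Nc i = fixedField (Hs i) :> {vspace E}))
    & (forall i, (i < k)%N ->
         cluster_size K (Nc i) = #|Hs i.+1 : Hs i|%g /\
         cluster_s K (Nc i) = #|G : Hs i.+1|%g)]
  /\
  (weak_cluster_magnification K (Nc k) L /\
   magnification_factor K (Nc k) L = cluster_size K L)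
  /\
  ((0 < k)%N -> (Nc k = K <-> galois K (Nc k.-1)))
  /\
  ((cluster_size K L = 1%N <-> NGH :=: H) /\ (NGH :=: H <-> k = 0%N))
  /\
  ((galois K L <-> NGH :=: G) /\ (NGH :=: G <-> k = 1%N /\ Nc 1%N = K))
  /\
  (((NGH <| G)%g /\ NGH \proper G) <-> [/\ k = 2%N, Nc 1%N = N & Nc 2%N = K]).
Proof.
move=> nLK; cbv zeta.
have sXN : H \subset 'N_G(H)%G := Hs_S 0.
have sNG : 'N_G(H)%G \subset G := Hs_sub 1.
have [ch1 ch2 ch3] := Nc_chain.
split.
  split.
  - exact: fixF_sub sNG.
  - by have := Hs_S 0; rewrite -fixF_le fixH.
  - by have := galB sXN; rewrite fixH normal_subnorm sHG.
  - by have := dimC sXN; rewrite fixH cL.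
  move=> M sKM sML gML dML.
  rewrite -fixH in sML gML dML.
  rewrite cL -(clusterA sHG) in dML.
  by apply/val_inj; apply: (stepU sHG sKM sML gML dML).
split.
  by rewrite (dimK sNG) -(clusterS sHG) Nc0'.
exists kk, Nc, Hs.
split.
  split.
  - exact: Nc_chain.
  - exact: Nc_unique.
  - case=> [|i]; first by rewrite ltnn.
    move=> /andP[_ lei]; rewrite -[i.+1.-1]/i (clusterS (Hs_sub i)).
    exact: (dimK (Hs_sub i.+1)).
  move=> k0; have [k1 Ek] : exists k1, kk = k1.+1 by exists kk.-1; rewrite prednK.
  have Pk1 : Pfix k1.+1 by rewrite -Ek; apply: Pk.
  rewrite Ek -[k1.+1.-1]/k1 (clusterS (Hs_sub k1)) (clusterS (Hs_sub k1.+1)).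
  by rewrite (eqP Pk1).
split.
  split.
  - exact: Hs_chain.
  - exact: Hs_unique.
  - case=> [|i]; first by rewrite ltnn.
    move=> /andP[_ lei]; rewrite -[i.+1.-1]/i; split.
      by have := normal_subnorm G (Hs i); rewrite Hs_sub.
    by apply: Hs_propS; apply: nPk.
  - by [].
  move=> i lti; split.
    exact: (clusterA (Hs_sub i)).
  exact: (clusterS (Hs_sub i)).
split.
  split.
    apply/and3P; split.
    - exact: fixF_sub (Hs_sub kk).
    - by rewrite -fixH fixF_le; exact: (Hs_mono (leq0n kk)).
    - by rewrite ch3 dvd1n.
  by rewrite /magnification_factor ch3 divn1.
split.
  move=> k0; have [k1 Ek] : exists k1, kk = k1.+1 by exists kk.-1; rewrite prednK.
  rewrite Ek -[k1.+1.-1]/k1.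
  have -> : galois K (Nc k1) = (Hs k1 <| G)%g by apply: (galK (Hs_sub k1)).
  rewrite -(NG_eq_normal (Hs_sub k1)).
  split.
    by move/(congr1 val) => /fixK.
  by move/fixK => e; apply/val_inj; exact: e.
split.
  split.
    rewrite cL; split.
      by move/eqP; rewrite indexg_eq1 => s; apply/eqP; rewrite eqEsubset s sXN.
    by move=> e; rewrite e indexgg.
  split.
    move=> e; have P0 : Pfix 0 by apply/eqP; exact: e.
    by apply/eqP; rewrite -leqn0; apply: k_min.
  by move=> k0; have := Pk; rewrite k0 => /eqP.
split.
  split.
    have := galK sHG; rewrite fixH => ->.
    exact: iff_sym (NG_eq_normal sHG).
  split.
    move=> e.
    have P1 : Pfix 1.
      rewrite /Pfix; change (('N_G('N_G(H)) == 'N_G(H))%g).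
      by rewrite e NGG eqxx.
    have nP0 : ~~ Pfix 0.
      apply/negP => /eqP P0.
      have eHG : H :=: G by rewrite -e; exact: esym P0.
      move: nLK; rewrite -Nc0' => /negP; apply; apply/eqP.
      by apply/val_inj; apply/fixK; exact: eHG.
    have k0 : kk != 0 by apply/eqP => k0; move: nP0; rewrite -k0 Pk.
    have := k_min P1.
    split; first by lia.
    by apply/val_inj; apply/fixK; exact: e.
  case=> _ N1.
  by move: N1 => /(congr1 val) /fixK.
split.
  case=> nN pN.
  have eH2 : Hs 2 :=: G := (NG_eq_normal sNG).2 nN.
  have P2 : Pfix 2.
    rewrite /Pfix; change (('N_G(Hs 2) == Hs 2)%g).
    by rewrite eH2 NGG eqxx.
  have nP1 : ~~ Pfix 1.
    apply/negP => /eqP P1.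
    have e : gval (Hs 2) = gval (Hs 1) := P1.
    by move: (proper_neq pN); rewrite eqEsubset; rewrite -eH2 e subxx.
  have nP0 : ~~ Pfix 0 by apply: contra nP1; apply: Pfix_succ.
  have k0 : kk != 0 by apply/eqP => k0; move: nP0; rewrite -k0 Pk.
  have k1 : kk != 1 by apply/eqP => k1; move: nP1; rewrite -k1 Pk.
  have := k_min P2.
  split; first by lia.
    by [].
  by apply/val_inj; apply/fixK; exact: eH2.
case=> k2 N1 N2.
have eH2 : Hs 2 :=: G by move: N2 => /(congr1 val) /fixK.
split.
  exact: (NG_eq_normal (Hs_sub 1)).1 eH2.
have := Hs_propS (nPk (_ : 1 < kk)); rewrite k2 => /(_ isT).
by rewrite eH2.
Qed.

End Chain.

End Gen.

Section Closure.
Variables (F : fieldType) (E : splittingFieldType F) (K L : {subfield E}).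
Hypotheses (galKE : galois K {:E}) (sKL : (K <= L)%VS).

Lemma closure_img (x : gal_of {:E}) : x \in 'Gal({:E} / K)%g ->
  (x @: galois_closure K L <= galois_closure K L)%VS.
Proof.
move=> galx; rewrite /galois_closure /=.
rewrite aimg_agen; apply: agenvS.
rewrite limg_sum; apply/subv_sumP => g galg.
apply: (sumv_sup (g * x)%g); first by rewrite groupM.
rewrite -limg_comp.
have -> : ((x \o g)%VF @: L)%VS = ((g * x)%g @: L)%VS.
  by apply: eq_in_limg => b _; rewrite comp_lfunE galM ?memvf.
exact: subvv.
Qed.

Lemma closure_sub : (L <= galois_closure K L)%VS.
Proof.
rewrite /galois_closure /=.
apply: subv_trans (sub_agenv _).
apply: (sumv_sup 1%g); first exact: group1.
rewrite (eq_in_limg (g := \1%VF)) ?lim1g //.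
by move=> b _; rewrite gal_id id_lfunE.
Qed.

Lemma closure_galois : galois K (galois_closure K L).
Proof.
have sKT := subv_trans sKL closure_sub.
case/and3P: galKE => _ sepKE nKE.
apply/and3P; split=> //.
  exact: separableSr (subvf _) sepKE.
apply/normalFieldP => a Ta.
have [r rsub Dp] := normalField_factors (subvf K) nKE a (memvf a).
exists (map (fun x : gal_of {:E}%AS => x a) r); last by rewrite big_map.
apply/allP => _ /mapP[x rx ->].
have galx : x \in 'Gal({:E} / K)%g by apply: (subsetP rsub).
by apply: (subvP (closure_img galx)); apply: memv_img.
Qed.

End Closure.

Theorem theorem7p1 (F : fieldType) (E : splittingFieldType F) (K L : {subfield E}) :
  galois K {:E} -> (K <= L)%VS -> L != K ->
  let Lt := galois_closure K L in
  let G := 'Gal(Lt / K)%G in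
  let H := 'Gal(Lt / L)%G in
  let NGH := 'N_G(H)%G in
  let N := fixed_subfield NGH in
  (* (1) *)
  [/\ (K <= N)%VS, (N <= L)%VS, galois N L, \dim_N L = cluster_size K L
    & (forall M : {subfield E}, (K <= M)%VS -> (M <= L)%VS -> galois M L ->
         \dim_M L = cluster_size K L -> M = N)]
  /\ \dim_K N = cluster_s K L
  /\
  exists (k : nat) (Nc : nat -> {subfield E}) (Hs : nat -> {group gal_of Lt}),
  (* (2) *)
  [/\ cluster_chain K L k Nc,
      (forall k' Nc', cluster_chain K L k' Nc' ->
         k' = k /\ (forall i, (i <= k)%N -> Nc' i = Nc i)),
      (forall i, (0 < i <= k)%N -> \dim_K (Nc i) = cluster_s K (Nc i.-1))
    & ((0 < k)%N -> cluster_s K (Nc k.-1) = cluster_s K (Nc k))]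
  /\
  [/\ normalizer_chain G H k Hs,
      (forall k' Hs', normalizer_chain G H k' Hs' ->
         k' = k /\ (forall i, (i <= k)%N -> Hs' i :=: Hs i)),
      (forall i, (0 < i <= k)%N -> (Hs i.-1 <| Hs i)%g /\ Hs i.-1 \proper Hs i),
      (forall i, (i <= k)%N -> (Nc i = fixedField (Hs i) :> {vspace E}))
    & (forall i, (i < k)%N ->
         cluster_size K (Nc i) = #|Hs i.+1 : Hs i|%g /\
         cluster_s K (Nc i) = #|G : Hs i.+1|%g)]
  /\
  (* (3) *)
  (weak_cluster_magnification K (Nc k) L /\
   magnification_factor K (Nc k) L = cluster_size K L)
  /\
  (* (4) *)
  ((0 < k)%N -> (Nc k = K <-> galois K (Nc k.-1)))
  /\
  (* (5) *)
  ((cluster_size K L = 1%N <-> NGH :=: H) /\ (NGH :=: H <-> k = 0%N))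
  /\
  (* (6) *)
  ((galois K L <-> NGH :=: G) /\ (NGH :=: G <-> k = 1%N /\ Nc 1%N = K))
  /\
  (* (7) *)
  (((NGH <| G)%g /\ NGH \proper G) <-> [/\ k = 2%N, Nc 1%N = N & Nc 2%N = K]).
Proof.
move=> galKE sKL nLK.
exact: (main_gen (closure_galois galKE sKL) sKL (closure_sub K L) nLK).
Qed.
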